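(* Let $N\ge 1$, $m\ge 1$ and let $a_1,\dots,a_N$, $k_1,\dots,k_m$ be positive integers satisfying the Calabi--Yau condition $\sum_{i=1}^N a_i=\sum_{l=1}^m k_l$. Let $d\ge 2$, let $f$ be an integer with $1\le f\le d-1$, and let $\sigma=(d_1,\dots,d_l)$ with $d_1\le\cdots\le d_l$, $\sum_{i=1}^l d_i=d-f$, be a partition of $d-f$ (so that $(f,\sigma)$ determines a type (iii) graph $\Gamma$ of degree $d$). Let $f_\Gamma$ be the rational function in the variables $w$, $z_0$, $z_{i,j}$ ($1\le i\le l$, $1\le j\le d_i$), with the convention $z_{i,0}:=z_0$, given by \[ f_\Gamma=\frac{\mathrm{Sym}(\sigma)}{24\bigl(\prod_{i=1}^Na_i\bigr)^{d}(z_0)^{N(f-1)}} \Biggl( \prod_{i=1}^l\prod_{j=1}^{d_i}\frac{1}{(z_{i,j})^N}\Biggr)\left(-\frac{N-m}{N}\frac{1}{w^N}-\frac{N+m}{N}\frac{1}{(z_0)^N} \right) \] \[ \times \frac{1}{(w-z_0)^2\,q(w,z_0)\,(q(z_0,z_0))^{f-1}} \Biggl( \prod_{p=1}^m\frac{1}{(k_pz_0)^{l-1}}\,\frac{e_{k_p}(w,z_0)\, (e_{k_p}(z_0,z_0) )^{f-1}}{k_p w\, (k_p z_0 )^{f}} \Biggr) \Biggl( \prod_{i=1}^l\frac{\prod_{p=1}^me_{k_p}(z_0,z_{i,1})}{q(z_0,z_{i,1})(z_{i,1}-z_0)}\Biggr) \] \[ \times \prod_{i=1}^l\prod_{j=1}^{d_i-1}\frac{\prod_{p=1}^m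 e_{k_p}(z_{i,j},z_{i,j+1})}{q(z_{i,j},z_{i,j+1})\,(2z_{i,j}-z_{i,j-1}-z_{i,j+1})\,\prod_{p=1}^m k_pz_{i,j}} . \] Let $\mathrm{Res}(f_\Gamma)$ be the number obtained as follows: first take the residue in $w$ at $w=z_0$; then take the residue of the result in $z_0$ at $z_0=0$; then, for each $i$ (the order among different $i$ does not matter), for $j=1,2,\dots,d_i-1$ in ascending order, replace the current function by the sum of its residues in $z_{i,j}$ at $z_{i,j}=0$ and at $z_{i,j}=\frac{z_{i,j-1}+z_{i,j+1}}{2}$; finally take the residue in $z_{i,d_i}$ at $z_{i,d_i}=0$. Then $\mathrm{Res}(f_\Gamma)=0$.
   Context: Notation: $e_k(x,y):=\prod_{i=0}^k\bigl(ix+(k-i)y\bigr)$ and $q(x,y):=\prod_{i=1}^N\prod_{j=1}^{a_i-1}\bigl(jx+(a_i-j)y\bigr)$, where the inner product is $1$ when $a_i=1$. For a partition $\sigma=(d_1,\dots,d_l)$ of length $l$, $\mathrm{Sym}(\sigma):=\frac{(l-1)!}{\prod_{i}\mathrm{mul}(\sigma,i)!}$, where $\mathrm{mul}(\sigma,i)$ is the number of parts of $\sigma$ equal to $i$. This $f_\Gamma$ is the integrand attached, in the paper's definition of the elliptic virtual structure constant $w\bigl(\prod_a(\mathcal O_{h^a})^{n_a}\bigr)_{1,d}$ of the complete intersection of degrees $k_1,\dots,k_m$ in the weighted projective space $P(a_1,\dots,a_N)$, to the type (iii) graph consisting of a central cluster vertex of degree $f$ and a star attached to it given by $\sigma$;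 in the Calabi--Yau case the degree selection rule forces all insertion exponents $n_a$ with $a\ge 2$ to vanish, so the insertion factor $\prod_{a\ge2}(\cdots)^{n_a}$ of the general integrand equals $1$, which is the form written here. *)

(* Defs.v *)
From HB Require Import structures.
From mathcomp Require Import all_boot all_order all_algebra.
From mathcomp Require Import fraction.
From mathcomp Require Import mpoly.
From Stdlib Require Import ClassicalEpsilon.

Set Implicit Arguments.
Unset Strict Implicit.
Unset Printing Implicit Defensive.

Import Order.TTheory GRing.Theory Num.Theory.
Local Open Scope ring_scope.

Definition RatFun (n : nat) := {fraction {mpoly rat[n]}}.

Definition toRF (n : nat) (p : {mpoly rat[n]}) : RatFun n := tofrac p.

Definition var (n : nat) (k : 'I_n) : RatFun n := toRF 'X_k.

Definition subst_poly (n : nat) (i : 'I_n) (a : RatFun n) (p : {mpoly rat[n]})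
  : RatFun n :=
  mmap (fun c : rat => toRF c%:MP) (fun j => if j == i then a else var j) p.

Definition poly_free_of (n : nat) (i : 'I_n) (p : {mpoly rat[n]}) : bool :=
  all (fun mo : 'X_{1..n} => mo i == 0%N) (msupp p).

Definition free_of (n : nat) (i : 'I_n) (c : RatFun n) : Prop :=
  exists p q : {mpoly rat[n]},
    [/\ poly_free_of i p, poly_free_of i q, q != 0 & c = toRF p / toRF q].

Definition regular_at (n : nat) (i : 'I_n) (a : RatFun n) (H : RatFun n) : Prop :=
  exists p q : {mpoly rat[n]},
    subst_poly i a q != 0 /\ H = toRF p / toRF q.

(* r is the residue of F in the variable X_i at X_i = a (a free of X_i):
   F = sum_{k=1}^{K} c_k / (X_i - a)^k + H with c_k free of X_i, H regular
   at X_i = a, and r = c_1. *)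
Definition is_residue (n : nat) (i : 'I_n) (a F r : RatFun n) : Prop :=
  exists (K : nat) (c : nat -> RatFun n) (H : RatFun n),
    [/\ forall k, free_of i (c k),
        regular_at i a H,
        F = \sum_(k < K) c k / (var i - a) ^+ k.+1 + H
      & r = (if (0 < K)%N then c 0%N else 0)].

Definition residue (n : nat) (i : 'I_n) (a F : RatFun n) : RatFun n :=
  epsilon (inhabits 0) (is_residue i a F).

Definition e_fun (R : comRingType) (k : nat) (x y : R) : R :=
  \prod_(i < k.+1) ((i%:R) * x + ((k - i)%N)%:R * y).

Definition q_fun (R : comRingType) (a : seq nat) (x y : R) : R :=
  \prod_(ai <- a) \prod_(1 <= j < ai) ((j%:R) * x + ((ai - j)%N)%:R * y).

Definition Sym (sigma : seq nat) : rat :=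
  ((size sigma).-1)`!%:R / (\prod_(i <- undup sigma) (count_mem i sigma)`!)%:R.

(* Number of variables: w, z_0 and the z_{i,j} (1 <= i <= l, 1 <= j <= d_i). *)
Definition nvars (sigma : seq nat) : nat := (sumn sigma).+2.

Definition RF (sigma : seq nat) := RatFun (nvars sigma).

(* variable indices: w = X_0, z_0 = X_1,
   z_{i,j} = X_{1 + d_1 + ... + d_{i-1} + j}  (i, j 1-based). *)
Definition idx_w (sigma : seq nat) : 'I_(nvars sigma) := inord 0.
Definition idx_z0 (sigma : seq nat) : 'I_(nvars sigma) := inord 1.
Definition idx_z (sigma : seq nat) (i j : nat) : 'I_(nvars sigma) :=
  inord (1 + sumn (take i.-1 sigma) + j).

Definition W (sigma : seq nat) : RF sigma := var (idx_w sigma).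
Definition Z0 (sigma : seq nat) : RF sigma := var (idx_z0 sigma).
Definition Z (sigma : seq nat) (i j : nat) : RF sigma :=
  if j == 0%N then Z0 sigma else var (idx_z sigma i j).

(* d_i, 1-based *)
Definition dpart (sigma : seq nat) (i : nat) : nat := nth 0%N sigma i.-1.

Definition f_Gamma (a k : seq nat) (d f : nat) (sigma : seq nat) : RF sigma :=
  let N := size a in
  let m := size k in
  let l := size sigma in
  let w := W sigma in
  let z0 := Z0 sigma in
  let z := Z sigma in
  let e := fun (kp : nat) (x y : RF sigma) => e_fun kp x y in
  let q := fun (x y : RF sigma) => q_fun a x y in
  let cst := fun (r : rat) => toRF (r%:MP : {mpoly rat[nvars sigma]}) in
  cst (Sym sigma)
    / (24%:R * ((\prod_(ai <- a) ai)%:R) ^+ d * z0 ^+ (N * (f - 1)))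
  * (\prod_(1 <= i < l.+1) \prod_(1 <= j < (dpart sigma i).+1)
        (z i j ^+ N)^-1)
  * (- ((N%:R - m%:R) / N%:R) / w ^+ N - ((N%:R + m%:R) / N%:R) / z0 ^+ N)
  * ((w - z0) ^+ 2 * q w z0 * (q z0 z0) ^+ (f - 1))^-1
  * (\prod_(kp <- k)
        (((kp%:R * z0) ^+ (l - 1))^-1
         * (e kp w z0 * (e kp z0 z0) ^+ (f - 1))
           / (kp%:R * w * (kp%:R * z0) ^+ f)))
  * (\prod_(1 <= i < l.+1)
        ((\prod_(kp <- k) e kp z0 (z i 1%N))
           / (q z0 (z i 1%N) * (z i 1%N - z0))))
  * (\prod_(1 <= i < l.+1) \prod_(1 <= j < dpart sigma i)
        ((\prod_(kp <- k) e kp (z i j) (z i j.+1))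
           / (q (z i j) (z i j.+1) * (2%:R * z i j - z i j.-1 - z i j.+1)
              * \prod_(kp <- k) (kp%:R * z i j)))).

Definition chain_residue (sigma : seq nat) (i : nat) (G : RF sigma) : RF sigma :=
  let di := dpart sigma i in
  let G' := foldl (fun H j =>
                     residue (idx_z sigma i j) 0 H
                     + residue (idx_z sigma i j)
                         ((Z sigma i j.-1 + Z sigma i j.+1) / 2%:R) H)
                  G (iota 1 di.-1) in
  residue (idx_z sigma i di) 0 G'.

Definition Res_Gamma (a k : seq nat) (d f : nat) (sigma : seq nat) : RF sigma :=
  let G1 := residue (idx_w sigma) (Z0 sigma) (f_Gamma a k d f sigma) in
  let G2 := residue (idx_z0 sigma) 0 G1 in
  foldl (fun G i => chain_residue i G) G2 (iota 1 (size sigma)).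

(* Main.v *)
Require Import Defs.
From HB Require Import structures.
From mathcomp Require Import all_boot all_order all_algebra.
From mathcomp Require Import fraction.
From mathcomp Require Import mpoly.
From mathcomp Require Import ring zify.
From Stdlib Require Import ClassicalEpsilon.
Import Order.TTheory GRing.Theory Num.Theory.
Local Open Scope ring_scope.
Set Implicit Arguments. Unset Strict Implicit. Unset Printing Implicit Defensive.

Section Gen.
Variable n : nat.
Implicit Types p q : {mpoly rat[n]}.
Definition phi : {rmorphism rat -> RatFun n} := (@tofrac _) \o (@mpolyC n rat).
Definition hsub (i : 'I_n) (b : RatFun n) := fun j => if j == i then b else var j.
Lemma subst_polyE i b p : subst_poly i b p = mmap phi (hsub i b) p.
Proof. by []. Qed.

Section Fix.
Variable i : 'I_n.

Lemma subM b p q : subst_poly i b (p * q) = subst_poly i b p * subst_poly i b q.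
Proof. by rewrite !subst_polyE rmorphM. Qed.
Lemma subD b p q : subst_poly i b (p + q) = subst_poly i b p + subst_poly i b q.
Proof. by rewrite !subst_polyE rmorphD. Qed.
Lemma subB b p q : subst_poly i b (p - q) = subst_poly i b p - subst_poly i b q.
Proof. by rewrite !subst_polyE rmorphB. Qed.
Lemma subN b p : subst_poly i b (- p) = - subst_poly i b p.
Proof. by rewrite !subst_polyE rmorphN. Qed.
Lemma sub0 b : subst_poly i b 0 = 0.
Proof. by rewrite !subst_polyE rmorph0. Qed.
Lemma subX b j : subst_poly i b 'X_j = hsub i b j.
Proof. by rewrite subst_polyE /mpolyX mmapX mmap1U. Qed.

Lemma toRF_inj p q : toRF p = toRF q -> p = q.
Proof. by move=> h; apply/eqP; rewrite -tofrac_eq; apply/eqP. Qed.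
Lemma toRF_eq0 p : (toRF p == 0) = (p == 0).
Proof. exact: tofrac_eq0. Qed.

Lemma pfD p q : poly_free_of i p -> poly_free_of i q -> poly_free_of i (p + q).
Proof.
move=> /allP hp /allP hq; apply/allP => m /msuppD_le; rewrite mem_cat.
by case/orP => [/hp|/hq].
Qed.
Lemma pfN p : poly_free_of i p -> poly_free_of i (- p).
Proof. by move=> /allP hp; apply/allP => m; rewrite (perm_mem (msuppN p)) => /hp. Qed.
Lemma pfB p q : poly_free_of i p -> poly_free_of i q -> poly_free_of i (p - q).
Proof. by move=> hp hq; apply: pfD => //; apply: pfN. Qed.
Lemma pfM p q : poly_free_of i p -> poly_free_of i q -> poly_free_of i (p * q).
Proof.
move=> /allP hp /allP hq; apply/allP => m /msuppM_le /allpairsP [[m1 m2] /= [h1 h2 ->]].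
by rewrite mnmDE (eqP (hp _ h1)) (eqP (hq _ h2)).
Qed.
Lemma pfC c : poly_free_of i c%:MP.
Proof.
apply/allP => m; rewrite msuppC; case: (c == 0) => //.
by rewrite mem_seq1 => /eqP ->; rewrite mnm0E.
Qed.
Lemma pfX j : j != i -> poly_free_of i 'X_j.
Proof.
move=> ne; apply/allP => m; rewrite /mpolyX msuppX mem_seq1 => /eqP ->.
by rewrite mnm1E eq_sym (negbTE ne).
Qed.

Lemma sub_free b p : poly_free_of i p -> subst_poly i b p = toRF p.
Proof.
move=> /allP hp; rewrite {2}(mpolyE p) /toRF rmorph_sum subst_polyE /mmap.
apply: eq_big_seq => m /hp /eqP hm.
rewrite -mul_mpolyC rmorphM /= mpolyXE_id rmorph_prod /mmap1.
congr (_ * _); apply: eq_bigr => j _; rewrite rmorphXn /hsub.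
by case: eqP => [->|//]; rewrite hm !expr0.
Qed.

Lemma toRF_neq0 {p : {mpoly rat[n]}} : p != 0 -> toRF p != 0.
Proof. by rewrite toRF_eq0. Qed.

Lemma frac_eq {p q p' q' : {mpoly rat[n]}} : q != 0 -> q' != 0 ->
  toRF p / toRF q = toRF p' / toRF q' -> p * q' = p' * q.
Proof.
move=> q0 q0' h; apply: toRF_inj.
have a : toRF q != 0 by apply: toRF_neq0.
have b : toRF q' != 0 by apply: toRF_neq0.
have : toRF p * toRF q' = toRF p' * toRF q.
  by apply/eqP; rewrite -(eqr_div _ _ a b); apply/eqP.
by rewrite /toRF -!rmorphM.
Qed.

Lemma fr_frac p q : poly_free_of i p -> poly_free_of i q -> q != 0 ->
  free_of i (toRF p / toRF q).
Proof. by move=> *; exists p, q. Qed.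

Lemma frM c d : free_of i c -> free_of i d -> free_of i (c * d).
Proof.
move=> [p [q [hp hq q0 ->]]] [p' [q' [hp' hq' q0' ->]]].
exists (p * p'), (q * q'); split; [exact: pfM|exact: pfM|by rewrite mulf_neq0|].
by rewrite /toRF !rmorphM /=; rewrite invfM; ring.
Qed.
Lemma frD c d : free_of i c -> free_of i d -> free_of i (c + d).
Proof.
move=> [p [q [hp hq q0 ->]]] [p' [q' [hp' hq' q0' ->]]].
exists (p * q' + p' * q), (q * q'); split.
- by apply: pfD; apply: pfM.
- exact: pfM.
- by rewrite mulf_neq0.
have a := toRF_neq0 q0; have b := toRF_neq0 q0'.
rewrite /toRF !rmorphD !rmorphM /=; exact: (addf_div _ _ a b).
Qed.
Lemma frN c : free_of i c -> free_of i (- c).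
Proof.
move=> [p [q [hp hq q0 ->]]]; exists (- p), q; split => //; first exact: pfN.
by rewrite /toRF rmorphN /= mulNr.
Qed.
Lemma frB c d : free_of i c -> free_of i d -> free_of i (c - d).
Proof. by move=> *; apply: frD => //; apply: frN. Qed.
Lemma frC c : free_of i (toRF c%:MP).
Proof. exists c%:MP, 1; split; [exact: pfC|exact: pfC|exact: oner_neq0|by rewrite /toRF rmorph1 divr1]. Qed.
Lemma pf0 : poly_free_of i 0.
Proof. rewrite /poly_free_of; suff -> : msupp (0 : {mpoly rat[n]}) = [::] by [].
by apply/eqP; rewrite msupp_eq0. Qed.
Lemma pf1 : poly_free_of i 1.
Proof. exact: (pfC 1). Qed.
Lemma fr0 : free_of i 0.
Proof. exists 0, 1; split; [exact: pf0|exact: pf1|exact: oner_neq0|by rewrite /toRF rmorph0 mul0r]. Qed.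
Lemma fr1 : free_of i 1.
Proof. exists 1, 1; split; [exact: pf1|exact: pf1|exact: oner_neq0|by rewrite /toRF rmorph1 divr1]. Qed.
Lemma frV c : free_of i c -> free_of i c^-1.
Proof.
move=> [p [q [hp hq q0 ->]]]; have [->|p0] := eqVneq p 0.
  by rewrite /toRF raddf0 mul0r invr0; exact: fr0.
by exists q, p; split => //; rewrite invfM invrK mulrC.
Qed.
Lemma frX c m : free_of i c -> free_of i (c ^+ m).
Proof. by move=> h; elim: m => [|m ih]; [rewrite expr0; exact: fr1|rewrite exprS; apply: frM]. Qed.
Lemma frn m : free_of i (m%:R).
Proof. by elim: m => [|m ih]; [exact: fr0|rewrite -addn1 natrD; apply: frD => //; exact: fr1]. Qed.
Lemma fr_var j : j != i -> free_of i (var j).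
Proof.
move=> ne; exists 'X_j, 1; split; [exact: pfX|exact: pfC|exact: oner_neq0|].
by rewrite /var /toRF rmorph1 divr1.
Qed.
Lemma fr_prod (T : Type) (s : seq T) (F : T -> RatFun n) :
  (forall x, free_of i (F x)) -> free_of i (\prod_(x <- s) F x).
Proof. by move=> h; elim/big_rec: _ => [|x y _ hy]; [exact: fr1|apply: frM]. Qed.
Lemma fr_prod_nat (m1 m2 : nat) (F : nat -> RatFun n) :
  (forall x, free_of i (F x)) -> free_of i (\prod_(m1 <= x < m2) F x).
Proof. by move=> h; elim/big_rec: _ => [|x y _ hy]; [exact: fr1|apply: frM]. Qed.
Lemma fr_sum (T : Type) (s : seq T) (F : T -> RatFun n) :
  (forall x, free_of i (F x)) -> free_of i (\sum_(x <- s) F x).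
Proof. by move=> h; elim/big_rec: _ => [|x y _ hy]; [exact: fr0|apply: frD]. Qed.

Section Reg.
Variable b : RatFun n.
Local Notation reg := (regular_at i b).

Lemma sub_neq0 {q : {mpoly rat[n]}} : subst_poly i b q != 0 -> q != 0.
Proof. by apply: contraNneq => ->; rewrite sub0. Qed.

Lemma rgM f g : reg f -> reg g -> reg (f * g).
Proof.
move=> [p [q [hq ->]]] [p' [q' [hq' ->]]]; exists (p * p'), (q * q'); split.
  rewrite subM; exact: mulf_neq0 hq hq'.
by rewrite /toRF !rmorphM /= invfM; ring.
Qed.
Lemma rgD f g : reg f -> reg g -> reg (f + g).
Proof.
move=> [p [q [hq ->]]] [p' [q' [hq' ->]]]; exists (p * q' + p' * q), (q * q'); split.
  rewrite subM; exact: mulf_neq0 hq hq'.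
have a := toRF_neq0 (sub_neq0 hq); have c := toRF_neq0 (sub_neq0 hq').
rewrite /toRF !rmorphD !rmorphM /=; exact: (addf_div _ _ a c).
Qed.
Lemma rgN f : reg f -> reg (- f).
Proof. by move=> [p [q [hq ->]]]; exists (- p), q; split => //; rewrite /toRF rmorphN /= mulNr. Qed.
Lemma rgB f g : reg f -> reg g -> reg (f - g).
Proof. by move=> *; apply: rgD => //; apply: rgN. Qed.
Lemma rg_free c : free_of i c -> reg c.
Proof. by move=> [p [q [hp hq q0 ->]]]; exists p, q; split => //; rewrite sub_free // toRF_neq0. Qed.
Lemma rg_var j : reg (var j).
Proof.
exists 'X_j, 1; split; last by rewrite /var /toRF rmorph1 divr1.
by rewrite sub_free ?toRF_neq0 ?oner_neq0 //; exact: pfC.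
Qed.
Lemma rg0 : reg 0. Proof. exact/rg_free/fr0. Qed.
Lemma rg1 : reg 1. Proof. exact/rg_free/fr1. Qed.
Lemma rgX f m : reg f -> reg (f ^+ m).
Proof. by move=> h; elim: m => [|m ih]; [rewrite expr0; exact: rg1|rewrite exprS; apply: rgM]. Qed.
Lemma rg_sum (s : seq nat) (F : nat -> RatFun n) :
  (forall x, reg (F x)) -> reg (\sum_(x <- s) F x).
Proof. by move=> h; elim/big_rec: _ => [|x y _ hy]; [exact: rg0|apply: rgD]. Qed.

Definition EV f e := exists p q, [/\ subst_poly i b q != 0, f = toRF p / toRF q
   & e = subst_poly i b p / subst_poly i b q].

Lemma EV_uniq f e1 e2 : EV f e1 -> EV f e2 -> e1 = e2.
Proof.
move=> [p [q [hq -> ->]]] [p' [q' [hq' eq ->]]].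
have := frac_eq (sub_neq0 hq) (sub_neq0 hq') eq => /(congr1 (subst_poly i b)).
rewrite !subM => h.
by apply/eqP; rewrite (eqr_div _ _ hq hq') h.
Qed.
Lemma EV_reg f : reg f -> exists e, EV f e.
Proof. by move=> [p [q [hq ->]]]; exists (subst_poly i b p / subst_poly i b q), p, q. Qed.
Lemma EV_is_reg f e : EV f e -> reg f.
Proof. by move=> [p [q [hq -> _]]]; exists p, q. Qed.
Lemma EVM f g e e' : EV f e -> EV g e' -> EV (f * g) (e * e').
Proof.
move=> [p [q [hq -> ->]]] [p' [q' [hq' -> ->]]]; exists (p * p'), (q * q'); split.
- rewrite subM; exact: mulf_neq0 hq hq'.
- by rewrite /toRF !rmorphM /= invfM; ring.
- by rewrite !subM invfM; ring.
Qed.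
Lemma EVD f g e e' : EV f e -> EV g e' -> EV (f + g) (e + e').
Proof.
move=> [p [q [hq -> ->]]] [p' [q' [hq' -> ->]]]; exists (p * q' + p' * q), (q * q'); split.
- rewrite subM; exact: mulf_neq0 hq hq'.
- have a := toRF_neq0 (sub_neq0 hq); have c := toRF_neq0 (sub_neq0 hq').
  rewrite /toRF !rmorphD !rmorphM /=; exact: (addf_div _ _ a c).
- rewrite subD !subM; exact: (addf_div _ _ hq hq').
Qed.
Lemma EVN f e : EV f e -> EV (- f) (- e).
Proof.
move=> [p [q [hq -> ->]]]; exists (- p), q; split => //.
  by rewrite /toRF rmorphN /= mulNr.
by rewrite subN mulNr.
Qed.
Lemma EV_free c : free_of i c -> EV c c.
Proof. by move=> [p [q [hp hq q0 ->]]]; exists p, q; split => //; rewrite ?sub_free // toRF_neq0. Qed.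
Lemma EV_var : EV (var i) b.
Proof.
exists 'X_i, 1; split.
- by rewrite sub_free ?toRF_neq0 ?oner_neq0 //; exact: pfC.
- by rewrite /var /toRF rmorph1 divr1.
- by rewrite subX sub_free; [rewrite /toRF rmorph1 divr1 /hsub eqxx|exact: pfC].
Qed.
Lemma EV_inv f e : EV f e -> e != 0 -> EV f^-1 e^-1.
Proof.
move=> [p [q [hq -> ->]]] e0; exists q, p; split.
- by apply: contraNneq e0 => ->; rewrite mul0r.
- by rewrite invfM invrK mulrC.
- by rewrite invfM invrK mulrC.
Qed.
End Reg.
End Fix.
End Gen.

Section Res.
Variable n : nat.
Variable i : 'I_n.
Variable a : RatFun n.
Hypothesis ha : free_of i a.
Local Notation t := (var i - a).
Local Notation reg := (regular_at i a).
Local Notation EV := (@EV n i a).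

Lemma EV_eq f e e' : EV f e -> e = e' -> EV f e'.
Proof. by move=> h <-. Qed.

Lemma EV_t : EV t 0.
Proof. apply: EV_eq; first exact: (EVD (EV_var i a) (EVN (EV_free a ha))). by rewrite subrr. Qed.

Lemma t_neq0 : t != 0.
Proof.
apply/negP => /eqP /eqP; rewrite subr_eq0 => /eqP hv.
move: ha => [p [q [hp hq q0 eqa]]].
have h1 : toRF 'X_i / toRF 1 = toRF p / toRF q.
  by rewrite /toRF rmorph1 divr1 -eqa -hv.
have := frac_eq (oner_neq0 _) q0 h1 => /(congr1 (subst_poly i (a + 1))).
rewrite !subM subX !sub_free //; last exact: pf1.
rewrite /hsub eqxx /toRF rmorph1 mulr1.
have Q0 : tofrac q != 0 by exact: (toRF_neq0 q0).
have -> : tofrac p = a * tofrac q by rewrite eqa /toRF divfK.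
rewrite mulrDl mul1r -{2}[a * _]addr0 => /addrI /eqP; rewrite (negbTE Q0) //.
Qed.

Lemma rg_sumo L (F : 'I_L -> RatFun n) : (forall x, reg (F x)) -> reg (\sum_(x < L) F x).
Proof. by move=> h; elim/big_rec: _ => [|x y _ hy]; [exact: rg0|apply: rgD]. Qed.

Lemma keyZ L : forall (e : nat -> RatFun n) G, (forall k, free_of i (e k)) -> reg G ->
  \sum_(j < L) e j * t ^+ j + G * t ^+ L = 0 -> forall j, (j < L)%N -> e j = 0.
Proof.
elim: L => [|L IH] e G fe rG h j //.
move: h; rewrite big_ord_recl /= expr0 mulr1 -addrA.
set X := \sum_(j < L) e j.+1 * t ^+ j + G * t ^+ L.
have -> : \sum_(i0 < L) e (bump 0 i0) * t ^+ bump 0 i0 + G * t ^+ L.+1 = t * X.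
  rewrite /X mulrDr mulr_sumr; congr (_ + _).
    by apply: eq_bigr => k _; rewrite /bump /= add1n exprS; ring.
  by rewrite exprS; ring.
move=> h.
have rX : reg X.
  apply: rgD; last by apply: rgM => //; apply: rgX; apply: rgB; [exact: rg_var|exact: rg_free].
  by apply: rg_sumo => k; apply: rgM; [exact: rg_free|apply: rgX; apply: rgB; [exact: rg_var|exact: rg_free]].
have [x ex] := EV_reg rX.
have e0 : e 0%N = 0.
  have E1 : EV (e 0%N + t * X) (e 0%N + 0 * x).
    apply: EVD. exact (@EV_free n i a (e 0%N) (fe 0%N)). exact: EVM EV_t ex.
  have E2 : EV (e 0%N + t * X) 0.
    rewrite h. exact (@EV_free n i a 0 (fr0 i)).
  by have := EV_uniq E1 E2; rewrite mul0r addr0.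
move: h; rewrite e0 add0r => /eqP; rewrite mulf_eq0 (negbTE t_neq0) /= => /eqP hX.
case: j => [//|j] jL.
exact: (IH (fun k => e k.+1) G (fun k => fe k.+1) rG hX j jL).
Qed.


Lemma sum_widen K L (c : nat -> RatFun n) : (K <= L)%N ->
  \sum_(k < K) c k / t ^+ k.+1 = \sum_(k < L) (if (k < K)%N then c k else 0) / t ^+ k.+1.
Proof.
move=> KL; rewrite (big_ord_widen L (fun k => c k / t ^+ k.+1) KL) big_mkcond /=.
by apply: eq_bigr => k _; case: ifP => _ //; rewrite mul0r.
Qed.

Lemma res_uniq F r1 r2 : is_residue i a F r1 -> is_residue i a F r2 -> r1 = r2.
Proof.
move=> [K [c [H [fc rH eF ->]]]] [K' [c' [H' [fc' rH' eF' ->]]]].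
set L := (K + K')%N.
set C := fun k => if (k < K)%N then c k else 0.
set C' := fun k => if (k < K')%N then c' k else 0.
have -> : (if (0 < K)%N then c 0%N else 0) = C 0%N by [].
have -> : (if (0 < K')%N then c' 0%N else 0) = C' 0%N by [].
have fC : forall k, free_of i (C k) by move=> k; rewrite /C; case: ifP => _; [exact: fc|exact: fr0].
have fC' : forall k, free_of i (C' k) by move=> k; rewrite /C'; case: ifP => _; [exact: fc'|exact: fr0].
move: eF'; rewrite eF (sum_widen c (leq_addr K' K)) (sum_widen c' (leq_addl K K')) -/L => /eqP.
rewrite -subr_eq0 => /eqP h0.
set D := fun k => C k - C' k.
have fD : forall k, free_of i (D k) by move=> k; apply: frB.
have h1 : \sum_(k < L) D k / t ^+ k.+1 + (H - H') = 0.
  rewrite -[RHS]h0; under eq_bigr => k _ do rewrite /D /= mulrBl.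
  by rewrite sumrB; ring.
case L0 : L => [|L1].
  move: L0; rewrite /L => /eqP; rewrite addn_eq0 => /andP [/eqP hK /eqP hK'].
  by rewrite /C /C' hK hK'.
have tL : t ^+ L != 0 by apply: expf_neq0; exact: t_neq0.
have h2 : \sum_(j < L) D (L.-1 - j)%N * t ^+ j + (H - H') * t ^+ L = 0.
  have e1 : (\sum_(k < L) D k / t ^+ k.+1 + (H - H')) * t ^+ L = 0 by rewrite h1 mul0r.
  rewrite -[RHS]e1 [RHS]mulrDl; congr (_ + _).
  rewrite mulr_suml (reindex_inj rev_ord_inj) /=; apply: eq_bigr => k _.
  have kk := ltn_ord k.
  have -> : (L.-1 - (L - k.+1))%N = k by move: (k : nat) kk => m; rewrite L0 /=; lia.
  have kL : (k.+1 + (L - k.+1))%N = L by lia.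
  have -> : t ^+ L = t ^+ k.+1 * t ^+ (L - k.+1) by rewrite -exprD kL.
  rewrite mulrA divfK //; exact: expf_neq0 t_neq0.
have := keyZ (e := fun j => D (L.-1 - j)%N) (G := H - H') (fun k => fD _) (rgB rH rH') h2.
move=> /(_ L.-1); rewrite subnn L0 ltnSn => /(_ isT) /eqP.
by rewrite subr_eq0 => /eqP.
Qed.

Lemma residue_eq F r : is_residue i a F r -> residue i a F = r.
Proof.
move=> h; apply: (res_uniq _ h); rewrite /residue.
exact: (epsilon_spec (inhabits 0) (is_residue i a F) (ex_intro _ r h)).
Qed.

Lemma residue0 : residue i a 0 = 0.
Proof.
apply: residue_eq; exists 0%N, (fun _ => 0), 0; split => //.
- by move=> _; exact: fr0.
- exact: rg0.
- by rewrite big_ord0 addr0.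
Qed.
End Res.

Lemma inv_id (F : fieldType) (u v t r : F) : u != 0 -> u + v * t + t ^+ 2 * r != 0 ->
  (u + v * t + t ^+ 2 * r)^-1 = u^-1 + (- v / u ^+ 2) * t + t ^+ 2 * ((v ^+ 2 - u * r + v * t * r) / (u ^+ 2 * (u + v * t + t ^+ 2 * r))).
Proof. move=> u0 f0. field. by rewrite f0 u0. Qed.

Section Jet.
Variable n : nat.
Variable i : 'I_n.
Variable a : RatFun n.
Hypothesis ha : free_of i a.
Local Notation t := (var i - a).
Local Notation reg := (regular_at i a).
Local Notation EV := (@EV n i a).

Definition J f u v := [/\ free_of i u, free_of i v &
   exists r, reg r /\ f = u + v * t + t ^+ 2 * r].

Lemma rg_t : reg t.
Proof. apply: rgB; [exact: rg_var|exact: rg_free]. Qed.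

Ltac rgt := repeat first [ exact: rg_t | exact: rg_var | (apply: rg_free; assumption) | assumption
  | apply: rgD | apply: rgM | apply: rgN | apply: rgX ].

Lemma J_eq f u v u' v' : J f u v -> u = u' -> v = v' -> J f u' v'.
Proof. by move=> h <- <-. Qed.

Lemma J_free c : free_of i c -> J c c 0.
Proof. move=> h; split => //; first exact: fr0. exists 0; split; first exact: rg0. by rewrite mul0r mulr0 !addr0. Qed.

Lemma J_var : J (var i) a 1.
Proof. split => //; first exact: fr1. exists 0; split; first exact: rg0. by rewrite mulr0 addr0 mul1r addrC subrK. Qed.

Lemma J_add f g u v u' v' : J f u v -> J g u' v' -> J (f + g) (u + u') (v + v').
Proof.
move=> [fu fv [r [rr ->]]] [fu' fv' [r' [rr' ->]]]; split; try exact: frD.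
by exists (r + r'); split; [exact: rgD|ring].
Qed.

Lemma J_opp f u v : J f u v -> J (- f) (- u) (- v).
Proof.
move=> [fu fv [r [rr ->]]]; split; try exact: frN.
by exists (- r); split; [exact: rgN|ring].
Qed.

Lemma J_mul f g u v u' v' : J f u v -> J g u' v' -> J (f * g) (u * u') (u * v' + v * u').
Proof.
move=> [fu fv [r [rr ->]]] [fu' fv' [r' [rr' ->]]]; split; try exact: frM.
  by apply: frD; apply: frM.
exists (v * v' + u * r' + u' * r + t * (v * r' + r * v') + t ^+ 2 * (r * r')); split; last by ring.
rgt.
Qed.

Lemma J_inv f u v : J f u v -> u != 0 -> J f^-1 u^-1 (- v / u ^+ 2).
Proof.
move=> [fu fv [r [rr ef]]] u0; split; [exact: frV|by apply: frM; [exact: frN|apply: frV; exact: frX]|].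
have [x ex] := EV_reg rr.
have Ef : EV f u.
  apply: (EV_eq (e := u + v * 0 + (0 * 0) * x)); last by rewrite mulr0 !mul0r !addr0.
  rewrite ef; apply: EVD; [apply: EVD|apply: EVM].
  - exact: EV_free.
  - by apply: EVM; [exact: EV_free|exact: (EV_t ha)].
  - rewrite expr2; apply: EVM; exact: (EV_t ha).
  - exact: ex.
have f0 : f != 0.
  apply/negP => /eqP f0; move: Ef; rewrite f0 => E0.
  by move: u0; rewrite (EV_uniq E0 (EV_free a (fr0 i))) eqxx.
have rf : reg f^-1 by apply: (EV_is_reg (EV_inv Ef u0)).
exists ((v ^+ 2 - u * r + v * t * r) / (u ^+ 2 * f)); split.
  rewrite invfM; rgt; apply: rg_free; apply: frV; exact: frX.
move: f0; rewrite ef => f0.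
exact: inv_id u0 f0.
Qed.
End Jet.

Lemma LJ_id1 (F : fieldType) (u l : F) : u != 0 -> - (u * l) / u ^+ 2 = u^-1 * - l.
Proof. move=> u0; field. exact: u0. Qed.
Lemma LJ_id2 (F : fieldType) (x y a : F) : (x + y) * a != 0 ->
  x * 1 + 0 * a + (y * 0 + 0 * a) = (x + y) * a * (x / ((x + y) * a)).
Proof. by move=> h; rewrite [RHS]mulrC divfK // mulr1 !mul0r mulr0 !addr0. Qed.

Section LJet.
Variable n : nat.
Variable i : 'I_n.
Variable a : RatFun n.
Hypothesis ha : free_of i a.
Local Notation J := (@J n i a).
Definition LJ f u l := free_of i l /\ J f u (u * l).

Lemma LJ_J f u l : LJ f u l -> J f u (u * l). Proof. by case. Qed.
Lemma LJ_eq f u l u' l' : LJ f u l -> u = u' -> l = l' -> LJ f u' l'.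
Proof. by move=> h <- <-. Qed.
Lemma LJ_free c : free_of i c -> LJ c c 0.
Proof. move=> h; split; first exact: fr0. by apply: J_eq (J_free a h) _ _; rewrite ?mulr0. Qed.
Lemma LJ_var : a != 0 -> LJ (var i) a a^-1.
Proof. move=> a0; split; first exact: frV. by apply: J_eq (J_var ha) _ _; rewrite ?mulfV. Qed.
Lemma LJ_mul f g u v l l' : LJ f u l -> LJ g v l' -> LJ (f * g) (u * v) (l + l').
Proof.
move=> [fl jf] [fl' jg]; split; first exact: frD.
by apply: J_eq (J_mul ha jf jg) _ _ => //; ring.
Qed.
Lemma LJ_inv f u l : LJ f u l -> u != 0 -> LJ f^-1 u^-1 (- l).
Proof.
move=> [fl jf] u0; split; first exact: frN.
by apply: J_eq (J_inv ha jf u0) _ _ => //; rewrite LJ_id1.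
Qed.
Lemma LJ_exp f u l m : LJ f u l -> LJ (f ^+ m) (u ^+ m) (m%:R * l).
Proof.
move=> h; elim: m => [|m ih].
  rewrite !expr0 mul0r. exact: LJ_free (fr1 i).
rewrite !exprS; apply: LJ_eq (LJ_mul h ih) _ _ => //; rewrite -addn1 natrD; ring.
Qed.
Lemma LJ_prod (T : Type) (s : seq T) (P : pred T) (F U Lm : T -> RatFun n) :
  (forall x, P x -> LJ (F x) (U x) (Lm x)) ->
  LJ (\prod_(x <- s | P x) F x) (\prod_(x <- s | P x) U x) (\sum_(x <- s | P x) Lm x).
Proof.
move=> h; apply: (big_rec3 (fun x y z => LJ x y z)).
  exact: LJ_free (fr1 i).
by move=> x y1 y2 y3 Px hy; exact: LJ_mul (h x Px) hy.
Qed.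
Lemma LJ_lin x y : free_of i x -> free_of i y -> (x + y) * a != 0 ->
  LJ (x * var i + y * a) ((x + y) * a) (x / ((x + y) * a)).
Proof.
move=> fx fy h; split.
  by apply: frM => //; apply: frV; apply: frM => //; apply: frD.
apply: J_eq (J_add (J_mul ha (J_free a fx) (J_var ha)) (J_mul ha (J_free a fy) (J_free a ha))) _ _.
  by rewrite mulrDl.
by rewrite LJ_id2.
Qed.
End LJet.

Lemma sumn_take_nth (s : seq nat) m : (sumn (take m s) + nth 0%N s m <= sumn s)%N.
Proof.
elim: s m => [|x s ih] [|m] //=; first by rewrite add0n leq_addr.
by rewrite -addnA leq_add2l ih.
Qed.

Section Idx.
Variable sigma : seq nat.
Lemma val_w : nat_of_ord (idx_w sigma) = 0%N.
Proof. by rewrite /idx_w inordK. Qed.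
Lemma val_z0 : nat_of_ord (idx_z0 sigma) = 1%N.
Proof. by rewrite /idx_z0 inordK. Qed.
Lemma val_z i j : (j <= dpart sigma i)%N ->
  nat_of_ord (idx_z sigma i j) = (1 + sumn (take i.-1 sigma) + j)%N.
Proof.
move=> hj; rewrite /idx_z inordK //.
have := sumn_take_nth sigma i.-1; rewrite /dpart in hj; lia.
Qed.
Lemma z0_free : free_of (idx_w sigma) (Z0 sigma).
Proof. apply: fr_var; apply/eqP => /(congr1 (@nat_of_ord _)); rewrite val_w val_z0. by []. Qed.
Lemma Z_free i j : (j <= dpart sigma i)%N -> free_of (idx_w sigma) (Z sigma i j).
Proof.
rewrite /Z; case: eqP => [_ _|/eqP j0 hj]; first exact: z0_free.
apply: fr_var; apply/eqP => /(congr1 (@nat_of_ord _)); rewrite val_w val_z //; lia.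
Qed.
End Idx.


Lemma rearr (F : fieldType) (x1 x2 x3 y q1 q2 x5 x6 x7 : F) :
  x1 * x2 * x3 / (y ^+ 2 * q1 * q2) * x5 * x6 * x7 =
  (y ^+ 2)^-1 * (x3 * ((q1 * q2)^-1 * x5 * (x1 * x2 * x6 * x7))).
Proof. rewrite !invfM; ring. Qed.

Lemma sum_nat_id (F : fieldType) K : (\sum_(j < K.+1) (j%:R : F)) * 2 = K%:R * (K%:R + 1).
Proof.
elim: K => [|K ih]; first by rewrite big_ord1 /= !mul0r.
rewrite big_ord_recr /= mulrDl ih -addn1 natrD; ring.
Qed.

Section N.
Variable n : nat.
Implicit Type (i : 'I_n).

Lemma fr_prod_in i (T : eqType) (s : seq T) (F : T -> RatFun n) :
  (forall x, x \in s -> free_of i (F x)) -> free_of i (\prod_(x <- s) F x).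
Proof. move=> h; rewrite big_seq; elim/big_rec: _ => [|x y xs hy]; [exact: fr1|apply: frM => //; exact: h]. Qed.

Lemma fr_e i kp x y : free_of i x -> free_of i y -> free_of i (e_fun kp x y).
Proof. by move=> fx fy; apply: fr_prod => j; apply: frD; apply: frM => //; apply: frn. Qed.
Lemma fr_q i A x y : free_of i x -> free_of i y -> free_of i (q_fun A x y).
Proof. by move=> fx fy; apply: fr_prod => ai; apply: fr_prod_nat => j; apply: frD; apply: frM => //; apply: frn. Qed.

Lemma natr_RF m : (0 < m)%N -> (m%:R : RatFun n) != 0.
Proof.
move=> m0; have -> : (m%:R : RatFun n) = toRF (m%:R) by rewrite /toRF rmorph_nat.
apply: toRF_neq0; rewrite -(rmorph_nat (@mpolyC n rat)) mpolyC_eq0 pnatr_eq0.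
by rewrite -lt0n.
Qed.

Lemma var_neq0 j : var j != 0 :> RatFun n.
Proof.
apply: toRF_neq0; apply/eqP => h; have := congr1 (@msupp _ _) h.
rewrite /mpolyX msuppX.
have /eqP -> : msupp (0 : {mpoly rat[n]}) == [::] by rewrite msupp_eq0.
by [].
Qed.
End N.


Lemma fid1 (F : fieldType) (s K a : F) : s * 2 = K * (K + 1) -> K != 0 -> a != 0 -> (2 : F) != 0 ->
  s / (K * a) = (K + 1) / (2 * a).
Proof. move=> h K0 a0 t0; have -> : s = K * (K + 1) / 2 by rewrite -h mulfK.
field. by rewrite K0 a0 t0. Qed.
Lemma fid2 (F : fieldType) (s K a : F) : s * 2 = K * (K + 1) -> K + 1 != 0 -> a != 0 -> (2 : F) != 0 ->
  s / ((K + 1) * a) = ((K + 1) - 1) / (2 * a).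
Proof. move=> h K0 a0 t0; have -> : s = K * (K + 1) / 2 by rewrite -h mulfK.
field. by rewrite K0 a0 t0. Qed.

Lemma ordS_le K (j : 'I_K.+1) : (j <= K)%N. Proof. by rewrite -ltnS. Qed.

Section LJ2.
Variable n : nat.
Variable i : 'I_n.
Variable a : RatFun n.
Hypothesis ha : free_of i a.
Hypothesis a0 : a != 0.
Local Notation LJ := (@LJ n i a).

Lemma LJ_prod_in (T : eqType) (s : seq T) (F U Lm : T -> RatFun n) :
  (forall x, x \in s -> LJ (F x) (U x) (Lm x)) ->
  LJ (\prod_(x <- s) F x) (\prod_(x <- s) U x) (\sum_(x <- s) Lm x).
Proof.
elim: s => [|x s ih] h; first by rewrite !big_nil; exact: (LJ_free a (fr1 i)).
rewrite !big_cons; apply: (LJ_mul ha); first by apply: h; rewrite mem_head.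
by apply: ih => y ys; apply: h; rewrite in_cons ys orbT.
Qed.

Lemma two_neq0 : (2 : RatFun n) != 0. Proof. exact: (natr_RF n (isT : (0 < 2)%N)). Qed.

Lemma LJ_e kp : (0 < kp)%N ->
  LJ (e_fun kp (var i) a) (e_fun kp a a) ((kp%:R + 1) / (2 * a)).
Proof.
move=> kp0; rewrite /e_fun.
have H : forall j : 'I_kp.+1, true -> LJ ((j%:R) * var i + ((kp - j)%N)%:R * a)
   ((j%:R + ((kp - j)%N)%:R) * a) (j%:R / ((j%:R + ((kp - j)%N)%:R) * a)).
  move=> j _; apply: LJ_lin => //; try exact: frn.
  rewrite -natrD subnKC; last by rewrite -ltnS ltn_ord.
  exact: mulf_neq0 (natr_RF n kp0) a0.
apply: LJ_eq (LJ_prod ha _ H) _ _.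
  by apply: eq_bigr => j _; rewrite mulrDl.
under eq_bigr => j _ do rewrite -natrD (subnKC (ordS_le j)).
rewrite -mulr_suml; apply: fid1; [exact: sum_nat_id|exact: natr_RF|exact: a0|exact: two_neq0].
Qed.

End LJ2.


Lemma sum_m1 (F : fieldType) (A : seq nat) (c : F) :
  \sum_(x <- A) (x%:R - 1) * c = ((sumn A)%:R - (size A)%:R) * c.
Proof.
elim: A => [|x A ih]; first by rewrite big_nil /= subrr mul0r.
rewrite big_cons ih /= natrD -natr1; ring.
Qed.

Lemma fid3 (F : fieldType) (K a : F) : a != 0 -> (2 : F) != 0 ->
  0 + ((K + 1) / (2 * a) + 0) + - (0 + a^-1 + 0) = (K - 1) / (2 * a).
Proof. move=> a0 t0; field. by rewrite a0 t0. Qed.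

Section LJ3.
Variable n : nat.
Variable i : 'I_n.
Variable a : RatFun n.
Hypothesis ha : free_of i a.
Hypothesis a0 : a != 0.
Local Notation LJ := (@LJ n i a).

Lemma LJ_qi ai : (0 < ai)%N ->
  LJ (\prod_(1 <= j < ai) (j%:R * var i + ((ai - j)%N)%:R * a))
     (\prod_(1 <= j < ai) (j%:R * a + ((ai - j)%N)%:R * a)) ((ai%:R - 1) / (2 * a)).
Proof.
move=> ai0.
have H : forall j, j \in index_iota 1 ai -> LJ ((j%:R) * var i + ((ai - j)%N)%:R * a)
   ((j%:R + ((ai - j)%N)%:R) * a) (j%:R / ((j%:R + ((ai - j)%N)%:R) * a)).
  move=> j; rewrite mem_index_iota => /andP [_ jl]; apply: (LJ_lin ha); try exact: frn.
  rewrite -natrD subnKC; last exact: ltnW.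
  exact: mulf_neq0 (natr_RF n ai0) a0.
apply: LJ_eq (LJ_prod_in ha H) _ _.
  by apply: eq_bigr => j _; rewrite mulrDl.
rewrite (eq_big_seq (fun j => j%:R / (ai%:R * a))); last first.
  by move=> j; rewrite mem_index_iota => /andP [_ jl]; rewrite -natrD subnKC // ltnW.
rewrite -mulr_suml.
have -> : \sum_(1 <= j < ai) (j%:R : RatFun n) = \sum_(j < ai) j%:R.
  transitivity (\sum_(0 <= j < ai) (j%:R : RatFun n)); last by rewrite big_mkord.
  by rewrite (big_ltn ai0) /= add0r.
clear H; case: ai ai0 => [//|K] _.
rewrite -natr1; apply: fid2; [exact: sum_nat_id|rewrite natr1; exact: natr_RF|exact: a0|exact: two_neq0].
Qed.

Lemma LJ_q A : all (fun x => 0 < x)%N A ->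
  LJ (q_fun A (var i) a) (q_fun A a a) (((sumn A)%:R - (size A)%:R) / (2 * a)).
Proof.
move=> /allP hA; rewrite /q_fun.
have H : forall ai, ai \in A -> LJ (\prod_(1 <= j < ai) (j%:R * var i + ((ai - j)%N)%:R * a))
     (\prod_(1 <= j < ai) (j%:R * a + ((ai - j)%N)%:R * a)) ((ai%:R - 1) / (2 * a)).
  by move=> ai /hA; exact: LJ_qi.
apply: LJ_eq (LJ_prod_in ha H) _ _ => //.
exact: sum_m1.
Qed.

Lemma LJ_kfac kp L f g : (0 < kp)%N ->
  LJ ((kp%:R * a) ^- L * (e_fun kp (var i) a * e_fun kp a a ^+ f) /
        (kp%:R * var i * (kp%:R * a) ^+ g))
     ((kp%:R * a) ^- L * (e_fun kp a a * e_fun kp a a ^+ f) /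
        (kp%:R * a * (kp%:R * a) ^+ g)) ((kp%:R - 1) / (2 * a)).
Proof.
move=> kp0.
have fk : free_of i (kp%:R : RatFun n) by exact: frn.
have fka : free_of i (kp%:R * a) by apply: frM.
apply: LJ_eq; [apply: (LJ_mul ha); [apply: (LJ_mul ha)|apply: (LJ_inv ha)]| |].
- apply: LJ_free; apply: frV; exact: frX.
- apply: (LJ_mul ha); [exact: LJ_e|apply: LJ_free; apply: frX; exact: fr_e].
- apply: (LJ_mul ha); [apply: (LJ_mul ha); [exact: LJ_free|exact: LJ_var]|apply: LJ_free; exact: frX].
- have nk := natr_RF n kp0; exact: mulf_neq0 (mulf_neq0 nk a0) (expf_neq0 _ (mulf_neq0 nk a0)).
- by [].
- exact: fid3 a0 (two_neq0 n).
Qed.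
End LJ3.

Ltac frt := repeat first [ assumption | apply: frn | apply: frC | apply: fr_e | apply: fr_q
  | apply: frM | apply: frD | apply: frB | apply: frN | apply: frV | apply: frX ].

Section Main.
Variables (a k : seq nat) (d f : nat) (sigma : seq nat).
Hypothesis hsig : all (fun x => 0 < x)%N sigma.
Local Notation i := (idx_w sigma).
Local Notation z := (Z0 sigma).
Local Notation ha := (z0_free sigma).

Lemma dpart_pos j : (1 <= j < (size sigma).+1)%N -> (0 < dpart sigma j)%N.
Proof.
move=> /andP [j1 jl]; rewrite /dpart; apply: (all_nthP 0%N hsig); lia.
Qed.

Lemma fC : free_of i
  (toRF (Sym sigma)%:MP_[nvars sigma] /
     (24%:R * (\prod_(ai <- a) ai)%:R ^+ d * Z0 sigma ^+ (size a * (f - 1))) *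
     \prod_(1 <= i < (size sigma).+1)
        \prod_(1 <= j < (dpart sigma i).+1) Z sigma i j ^- size a *
     \prod_(1 <= i < (size sigma).+1)
        (\prod_(kp <- k) e_fun kp (Z0 sigma) (Z sigma i 1) /
         (q_fun a (Z0 sigma) (Z sigma i 1) * (Z sigma i 1 - Z0 sigma))) *
     \prod_(1 <= i < (size sigma).+1)
        \prod_(1 <= j < dpart sigma i)
           (\prod_(kp <- k) e_fun kp (Z sigma i j) (Z sigma i j.+1) /
            (q_fun a (Z sigma i j) (Z sigma i j.+1) *
             (2%:R * Z sigma i j - Z sigma i j.-1 - Z sigma i j.+1) *
             \prod_(kp <- k) (kp%:R * Z sigma i j)))).
Proof.
have hz := ha.
apply: frM; [apply: frM; [apply: frM|]|].
- frt.
- apply: fr_prod_in => j /[!mem_index_iota] hj; apply: fr_prod_in => m /[!mem_index_iota] hm.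
  apply: frV; apply: frX; apply: Z_free; lia.
- apply: fr_prod_in => j /[!mem_index_iota] hj.
  have hZ : free_of i (Z sigma j 1) by apply: Z_free; exact: dpart_pos.
  apply: frM; [apply: fr_prod => kp; exact: fr_e|frt].
- apply: fr_prod_in => j /[!mem_index_iota] hj; apply: fr_prod_in => m /[!mem_index_iota] hm.
  have h1 : free_of i (Z sigma j m) by apply: Z_free; lia.
  have h2 : free_of i (Z sigma j m.+1) by apply: Z_free; lia.
  have h3 : free_of i (Z sigma j m.-1) by apply: Z_free; lia.
  apply: frM; [apply: fr_prod => kp; exact: fr_e|].
  apply: frV; apply: frM; [frt|apply: fr_prod => kp; frt].
Qed.
End Main.



Lemma fin (F : fieldType) (N m K z Zn U : F) : z != 0 -> N != 0 -> (2:F) != 0 -> Zn != 0 ->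
 (- ((N - m) / N) / Zn - (N + m) / N / Zn) * (U * (- ((K - N) / (2 * z) + 0) + (K - m) / (2 * z) + 0))
 + (- ((N - m) / N) * (Zn^-1 * - (N / z)) + 0 / Zn - 0) * U = 0.
Proof. move=> z0 N0 t0 Z0; field. by rewrite z0 N0 t0 Z0. Qed.

Lemma fin2 (F : fieldType) (t u r : F) : t != 0 ->
  (t ^+ 2)^-1 * (u + 0 * t + t ^+ 2 * r) = 0 + 0 / t ^+ 1 + u / t ^+ 2 + r.
Proof. move=> t0; field. exact: t0. Qed.

Section Main.
Variables (a k : seq nat) (d f : nat) (sigma : seq nat).
Hypothesis hsig : all (fun x => 0 < x)%N sigma.
Hypothesis hapos : all (fun x => 0 < x)%N a.
Hypothesis hkpos : all (fun x => 0 < x)%N k.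
Hypothesis hN : (1 <= size a)%N.
Hypothesis hsum : sumn a = sumn k.
Local Notation i := (idx_w sigma).
Local Notation z := (Z0 sigma).
Local Notation ha := (z0_free sigma).

Lemma a0 : z != 0. Proof. exact: var_neq0. Qed.

Lemma q_neq0 A : all (fun x => 0 < x)%N A -> q_fun A z z != 0.
Proof.
move=> /allP hA; rewrite /q_fun prodf_seq_neq0; apply/allP => ai /hA ai0 /=.
rewrite prodf_seq_neq0; apply/allP => j; rewrite mem_index_iota => /andP [_ jl] /=.
rewrite -mulrDl -natrD subnKC; last exact: ltnW.
exact: mulf_neq0 (natr_RF _ ai0) a0.
Qed.

Lemma main_res : residue i z (f_Gamma a k d f sigma) = 0.
Proof.
apply: (residue_eq ha).
rewrite /f_Gamma /= rearr.
match goal with |- is_residue _ _ (_ * (?S * (?QI * ?X5 * ?C))) _ =>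
  set SS := S; set QQ := QI; set XX := X5; set CC := C end.
have fCC : free_of i CC by exact: fC.
have hz := ha.
have LW := LJ_inv ha (LJ_exp ha (size a) (LJ_var ha a0)) (expf_neq0 (size a) a0).
have fal : free_of i (- (((size a)%:R - (size k)%:R) / (size a)%:R)).
  by apply: frN; apply: frM; [apply: frD; [apply: frn|apply: frN; apply: frn]|apply: frV; apply: frn].
have fbe : free_of i (((size a)%:R + (size k)%:R) / (size a)%:R / z ^+ size a) by frt.
have JS := J_add (J_mul ha (J_free z fal) (LJ_J LW)) (J_opp (J_free z fbe)).
have fQ2 : free_of i (q_fun a z z ^+ (f - 1)) by frt.
have nzQ := mulf_neq0 (q_neq0 hapos) (expf_neq0 (f - 1) (q_neq0 hapos)).
have LQ := LJ_inv ha (LJ_mul ha (LJ_q ha a0 hapos) (LJ_free z fQ2)) nzQ.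
have LX := LJ_eq (LJ_prod_in ha (fun kp h => LJ_kfac ha a0 (size sigma - 1) (f - 1) f (allP hkpos kp h))) (erefl _) (sum_m1 _ _).
have LY := LJ_mul ha (LJ_mul ha LQ LX) (LJ_free z fCC).
have JG := J_mul ha JS (LJ_J LY).
have [u Ju] : exists u, J i z (SS * (QQ * XX * CC)) u 0.
  eexists; refine (J_eq JG _ _); first by [].
  rewrite hsum; apply: fin.
  - exact: a0.
  - exact: natr_RF.
  - exact: two_neq0.
  - exact: expf_neq0 a0.
case: Ju => fu _ [r [rr Gr]].
exists 2%N, (fun m => if m == 1%N then u else 0), r; split => //.
- by move=> [|[|m]] /=; [exact: fr0|exact: fu|exact: fr0].
- rewrite Gr !big_ord_recr big_ord0 /=; exact: fin2 (t_neq0 ha).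
Qed.
End Main.

Lemma foldl0 (T R : Type) (z : R) (g : R -> T -> R) (s : seq T) (P : T -> Prop) :
  (forall x, P x -> g z x = z) -> (forall x, P x) -> foldl g z s = z.
Proof. by move=> h hp; elim: s => [|x s ih] //=; rewrite h. Qed.

Lemma foldl0_in (T : eqType) (R : Type) (z : R) (g : R -> T -> R) (s : seq T) :
  (forall x, x \in s -> g z x = z) -> foldl g z s = z.
Proof.
elim: s => [|x s ih] h //=; rewrite h ?mem_head //.
by apply: ih => y ys; apply: h; rewrite in_cons ys orbT.
Qed.

Lemma Z_free_z sigma j m m' : (m <= dpart sigma j)%N -> (m' <= dpart sigma j)%N -> (0 < m)%N -> m' != m ->
  free_of (idx_z sigma j m) (Z sigma j m').
Proof.
move=> hm hm' m0 ne; rewrite /Z; case: eqP => [_|/eqP m'0].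
  apply: fr_var; apply/eqP => /(congr1 (@nat_of_ord _)); rewrite val_z0 val_z //; lia.
apply: fr_var; apply/eqP => /(congr1 (@nat_of_ord _)); rewrite !val_z //.
move/eqP: ne; lia.
Qed.

Lemma chain0 sigma j : chain_residue j (0 : RF sigma) = 0.
Proof.
rewrite /chain_residue /=.
rewrite foldl0_in; first exact: (residue0 (fr0 _)).
move=> m; rewrite mem_iota => /andP [m1 m2].
have hm : (m <= dpart sigma j)%N by lia.
rewrite (residue0 (fr0 _)) (residue0 _) ?addr0 //.
apply: frM; last by apply: frV; apply: frn.
apply: frD; apply: Z_free_z => //; lia.
Qed.

Theorem proposition1 (a k : seq nat) (d f : nat) (sigma : seq nat) :
  (1 <= size a)%N -> (1 <= size k)%N ->
  all (fun x => 0 < x)%N a -> all (fun x => 0 < x)%N k ->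
  sumn a = sumn k ->
  (2 <= d)%N -> (1 <= f)%N -> (f <= d - 1)%N ->
  all (fun x => 0 < x)%N sigma -> sorted leq sigma -> sumn sigma = (d - f)%N ->
  Res_Gamma a k d f sigma = 0.
Proof.
move=> hN hK hapos hkpos hsum hd hf hfd hsig hsort hsumsig.
rewrite /Res_Gamma /=.
rewrite (main_res d f hsig hapos hkpos hN hsum).
rewrite (residue0 (fr0 _)).
apply: foldl0_in => j _; exact: chain0.
Qed.
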